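(* Let $L \geq 1$, $m = L+1$, $\gamma = (L+1)^3$, and for $i \in \{0,\ldots,L\}$ and $k \in [m]$ define $$w_i(k) = \gamma^{2(i+1)k - k^2 + 1} + \sum_{r=0}^L \gamma^{(2r+1)(i+1) - r^2 - r}, \qquad \pi_i(A_k) = \frac{w_i(k)}{\sum_{h=1}^m w_i(h)}.$$ Let $B = \min_{k\in[m]}\prod_{i=1}^L \min\left\{1, \frac{\pi_{i-1}(A_k)}{\pi_i(A_k)}\right\}$. Then $B > \frac{1}{(L+1)^7}$.
   Context: These numbers are the masses of the modes $A_k$ at level $i$ in the paper's construction of a multimodal target (cross terms neglected); $B$ is the bottleneck ratio of the corresponding parallel tempering chain. *)

(* Defs.v *)
From mathcomp Require Import all_boot all_order all_algebra.
Set Implicit Arguments. Unset Strict Implicit. Unset Printing Implicit Defensive.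
Import Order.TTheory GRing.Theory Num.Theory.
Local Open Scope ring_scope.

Definition gam (R : realFieldType) (L : nat) : R := ((L.+1) ^ 3)%:R.

(* w_i(k) = gamma^(2(i+1)k - k^2 + 1) + sum_{r=0}^L gamma^((2r+1)(i+1) - r^2 - r),
   integer exponents (they can be negative) *)
Definition wgt (R : realFieldType) (L i k : nat) : R :=
  gam R L ^ ((2 * (i.+1) * k)%:Z - (k ^ 2)%:Z + 1)
  + \sum_(0 <= r < L.+1)
      gam R L ^ (((2 * r).+1 * i.+1)%:Z - (r ^ 2)%:Z - r%:Z).

Definition piA (R : realFieldType) (L i k : nat) : R :=
  wgt R L i k / \sum_(1 <= h < L.+2) wgt R L i h.

Definition prodk (R : realFieldType) (L k : nat) : R :=
  \prod_(1 <= i < L.+1) Num.min 1 (piA R L i.-1 k / piA R L i k).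

Definition Bratio (R : realFieldType) (L : nat) : R :=
  \big[Num.min/1]_(1 <= k < L.+2) prodk R L k.

(* Main.v *)
Require Import Defs.
From mathcomp Require Import all_boot all_order all_algebra.
From mathcomp Require Import zify ring lra.
Import Order.TTheory GRing.Theory Num.Theory.
Set Implicit Arguments. Unset Strict Implicit.
Local Open Scope ring_scope.

Definition dist (a b : nat) : nat := (a - b + (b - a))%N.
Definition ex (j r : nat) : nat :=
  if (r < j)%N then ((j - r) * (j - r).-1).+1 else ((r - j) * (r - j).+1).+1.
Definition sS {R : realFieldType} (q : R) (n j : nat) : R :=
  \sum_(0 <= r < n) q ^+ ex j r.
Definition UU {R : realFieldType} (q : R) (n j k : nat) : R :=
  q ^+ (dist j k ^ 2) + sS q n j.
Definition ZZ {R : realFieldType} (q : R) (n j : nat) : R :=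
  \sum_(1 <= h < n.+1) UU q n j h.

Lemma expz_split (R : realFieldType) (g : R) (N E : int) (e : nat) :
  g != 0 -> E = N - e%:Z -> g ^ E = g ^ N * g^-1 ^+ e.
Proof.
move=> g0 ->; rewrite exprzDr ?unitfE // exprVn exprnN //.
Qed.

Lemma wgt_eq (R : realFieldType) (L i k : nat) :
  wgt R L i k = gam R L ^ ((i.+1 ^ 2 + 1)%N%:Z) * UU (gam R L)^-1 L.+1 i.+1 k.
Proof.
have g0 : gam R L != 0 by rewrite /gam pnatr_eq0 expn_eq0.
rewrite /wgt /UU /sS mulrDr mulr_sumr.
congr (_ + _).
  apply: expz_split => //; rewrite /dist.
  case: (leqP k i.+1) => h.
    have ->: (k - i.+1 = 0)%N by apply/eqP; rewrite subn_eq0.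
    rewrite addn0; nia.
  have ->: (i.+1 - k = 0)%N by apply/eqP; rewrite subn_eq0 ltnW.
  rewrite add0n; nia.
apply: eq_bigr => r _; apply: expz_split => //; rewrite /ex.
case: ifP => h.
  have : (0 < i.+1 - r)%N by rewrite subn_gt0.
  case E: (i.+1 - r)%N => [|t] // _ /=.
  nia.
have : (i.+1 <= r)%N by rewrite leqNgt h.
move=> h2; nia.
Qed.
Definition GG {R : realFieldType} (q : R) (m : nat) : R :=
  \sum_(0 <= r < m) q ^+ (r * r.+1).+1.
Definition FF {R : realFieldType} (q : R) (m : nat) : R :=
  \sum_(0 <= d < m) q ^+ (d.+1 ^ 2).
Definition tT {R : realFieldType} (q : R) (n j : nat) : R :=
  \sum_(1 <= h < n.+1) q ^+ (dist j h ^ 2).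

Lemma piA_eq (R : realFieldType) (L i k : nat) :
  piA R L i k = UU (gam R L)^-1 L.+1 i.+1 k / ZZ (gam R L)^-1 L.+1 i.+1.
Proof.
have g0 : gam R L != 0 by rewrite /gam pnatr_eq0 expn_eq0.
rewrite /piA /ZZ wgt_eq (eq_bigr _ (fun h _ => wgt_eq R L i h)) -mulr_sumr.
rewrite invfM mulrACA mulfV ?mul1r // expfz_eq0 negb_and g0 orbT //.
Qed.

Lemma s_split (R : realFieldType) (q : R) n j : (j <= n)%N ->
  sS q n j = GG q j + GG q (n - j).
Proof.
move=> hj; rewrite /sS (big_cat_nat (leq0n j) hj) /=.
congr (_ + _).
  rewrite big_nat_rev /GG; apply: eq_big_nat => r /andP [_ hr].
  rewrite add0n /ex ifT; last by lia.
  congr (_ ^+ _); congr (_.+1).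
  have -> : (j - (j - r.+1) = r.+1)%N by lia.
  by rewrite /= mulnC.
rewrite -{1}(add0n j) big_addn /GG; apply: eq_big_nat => r _.
rewrite /ex ifF; last by lia.
by rewrite addnK.
Qed.

Lemma t_split (R : realFieldType) (q : R) n j : (1 <= j <= n)%N ->
  tT q n j = (1 + FF q j.-1) + FF q (n - j).
Proof.
move=> /andP [j1 jn]; rewrite /tT (big_cat_nat j1) /=; last by lia.
rewrite [RHS]addrAC [RHS]addrC; congr (_ + _); last first.
  rewrite -{1}(add0n j) big_addn big_ltn; last by lia.
  have -> : dist j (0 + j) = 0%N by rewrite /dist; lia.
  rewrite expr0; congr (_ + _).
  rewrite big_add1 /FF; have -> : ((n.+1 - j).-1 = n - j)%N by lia.
  apply: eq_big_nat => d _; congr (_ ^+ (_ ^ 2)); rewrite /dist; lia.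
rewrite big_nat_rev /= big_add1 /FF; apply: eq_big_nat => d /andP [_ hd].
congr (_ ^+ (_ ^ 2)); rewrite /dist; lia.
Qed.

Lemma Z_split (R : realFieldType) (q : R) n j :
  ZZ q n j = tT q n j + n%:R * sS q n j.
Proof.
by rewrite /ZZ /UU big_split /= sumr_const_nat subSS subn0 mulr_natl.
Qed.

Lemma GG_ge0 (R : realFieldType) (q : R) m : 0 <= q -> 0 <= GG q m.
Proof. by move=> q0; apply: sumr_ge0 => r _; rewrite exprn_ge0. Qed.

Lemma FF_ge0 (R : realFieldType) (q : R) m : 0 <= q -> 0 <= FF q m.
Proof. by move=> q0; apply: sumr_ge0 => r _; rewrite exprn_ge0. Qed.

Lemma GG_lb (R : realFieldType) (q : R) m : 0 <= q -> (1 <= m)%N -> q <= GG q m.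
Proof.
move=> q0 m1; rewrite /GG big_ltn // muln1 expr1 lerDl.
by apply: sumr_ge0 => r _; rewrite exprn_ge0.
Qed.

Lemma GG_ub (R : realFieldType) (q : R) m : 0 <= q -> q <= 1 ->
  GG q m <= q + m%:R * q ^+ 3.
Proof.
move=> q0 q1; case: m => [|m].
  by rewrite /GG big_geq // addr_ge0 // mulr_ge0 // exprn_ge0.
rewrite /GG big_ltn // muln1 expr1 lerD2l.
apply: (@le_trans _ _ (\sum_(1 <= r < m.+1) q ^+ 3)).
  apply: ler_sum_nat => r /andP [r1 _]; apply: ler_wiXn2l => //; nia.
rewrite sumr_const_nat subn1 /= -[_ *+ m]mulr_natl ler_wpM2r ?exprn_ge0 // ler_nat leqnSn //.
Qed.

Lemma FF_ub (R : realFieldType) (q : R) m : 0 <= q -> q <= 1 ->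
  FF q m <= q + m%:R * q ^+ 4.
Proof.
move=> q0 q1; case: m => [|m].
  by rewrite /FF big_geq // addr_ge0 // mulr_ge0 // exprn_ge0.
rewrite /FF big_ltn // (_ : (0.+1 ^ 2 = 1)%N) // expr1 lerD2l.
apply: (@le_trans _ _ (\sum_(1 <= r < m.+1) q ^+ 4)).
  apply: ler_sum_nat => r /andP [r1 _]; apply: ler_wiXn2l => //; nia.
rewrite sumr_const_nat subn1 /= -[_ *+ m]mulr_natl ler_wpM2r ?exprn_ge0 // ler_nat leqnSn //.
Qed.

Lemma s_lb2 (R : realFieldType) (q : R) n j : 0 <= q -> (1 <= j)%N -> (j < n)%N ->
  2 * q <= sS q n j.
Proof.
move=> q0 j1 jn; rewrite s_split; last exact: ltnW.
have h1 := @GG_lb _ q j q0 j1.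
have h2 := @GG_lb _ q (n - j) q0 ltac:(lia).
lra.
Qed.

Lemma s_ge0 (R : realFieldType) (q : R) n j : 0 <= q -> 0 <= sS q n j.
Proof. by move=> q0; apply: sumr_ge0 => r _; rewrite exprn_ge0. Qed.

Lemma s_ub (R : realFieldType) (q : R) n j : 0 <= q -> q <= 1 -> (j <= n)%N ->
  sS q n j <= 2 * q + n%:R * q ^+ 3.
Proof.
move=> q0 q1 jn; rewrite s_split //.
have h1 := @GG_ub _ q j q0 q1.
have h2 := @GG_ub _ q (n - j) q0 q1.
have -> : n%:R = j%:R + (n - j)%:R :> R by rewrite -natrD subnKC.
lra.
Qed.

Lemma t_ub (R : realFieldType) (q : R) n j : 0 <= q -> q <= 1 -> (1 <= j <= n)%N ->
  tT q n j <= 1 + 2 * q + n%:R * q ^+ 4.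
Proof.
move=> q0 q1 hj; rewrite t_split //.
have h1 := @FF_ub _ q j.-1 q0 q1.
have h2 := @FF_ub _ q (n - j) q0 q1.
have hab : (j.-1)%:R + (n - j)%:R <= n%:R :> R by rewrite -natrD ler_nat; lia.
have h4 : 0 <= q ^+ 4 by rewrite exprn_ge0.
have := ler_wpM2r h4 hab; lra.
Qed.

Lemma t_lb (R : realFieldType) (q : R) n j : 0 <= q -> (1 <= j <= n)%N ->
  1 <= tT q n j.
Proof.
move=> q0 hj; rewrite t_split //.
have := @FF_ge0 _ q j.-1 q0; have := @FF_ge0 _ q (n - j) q0; lra.
Qed.

Definition zh {R : realFieldType} (q : R) (n : nat) : R :=
  1 + 2 * q + n%:R * q ^+ 4 + n%:R * (2 * q + n%:R * q ^+ 3).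

Lemma Z_ub (R : realFieldType) (q : R) n j : 0 <= q -> q <= 1 -> (1 <= j <= n)%N ->
  ZZ q n j <= zh q n.
Proof.
move=> q0 q1 hj; rewrite Z_split /zh.
have h1 := @t_ub _ q n j q0 q1 hj.
have h2 := @s_ub _ q n j q0 q1 ltac:(lia).
have := @ler_wpM2l _ (n%:R) (ler0n _ _) _ _ h2.
lra.
Qed.

Lemma Z_lb (R : realFieldType) (q : R) n j : 0 <= q -> (1 <= j <= n)%N ->
  1 <= ZZ q n j.
Proof.
move=> q0 hj; rewrite Z_split.
have := @t_lb _ q n j q0 hj.
have : 0 <= n%:R * sS q n j by rewrite mulr_ge0 ?s_ge0.
lra.
Qed.

Lemma U_le_Z (R : realFieldType) (q : R) n j k : 0 <= q -> q <= 1 -> (1 <= j <= n)%N ->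
  UU q n j k <= ZZ q n j.
Proof.
move=> q0 q1 hj; rewrite Z_split /UU.
have h1 := @t_lb _ q n j q0 hj.
have h2 : q ^+ (dist j k ^ 2) <= 1 by exact: exprn_ile1.
have n1 : 1 <= n%:R :> R by rewrite ler1n; lia.
have n1p : 0 <= n%:R - 1 :> R by lra.
have := mulr_ge0 n1p (@s_ge0 _ q n j q0).
lra.
Qed.

Lemma U_gt0 (R : realFieldType) (q : R) n j k : 0 < q -> 0 < UU q n j k.
Proof.
move=> q0; rewrite /UU.
have := @s_ge0 _ q n j (ltW q0).
have : 0 < q ^+ (dist j k ^ 2) by rewrite exprn_gt0.
lra.
Qed.

Lemma U_up (R : realFieldType) (q : R) n i k : 0 <= q -> q <= 1 ->
  (1 <= i)%N -> (i.+1 < k)%N -> (k <= n)%N ->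
  UU q n i k <= (1 + n%:R * q ^+ 2 / 2) * UU q n i.+1 k.
Proof.
move=> q0 q1 i1 ik kn; rewrite /UU.
have h1 : q ^+ (dist i k ^ 2) <= q ^+ (dist i.+1 k ^ 2).
  apply: ler_wiXn2l => //; rewrite /dist; nia.
have hA := @s_ub _ q n i q0 q1 ltac:(lia).
have hB := @s_lb2 _ q n i.+1 q0 ltac:(lia) ltac:(lia).
have h4 : 0 <= q ^+ (dist i.+1 k ^ 2) by rewrite exprn_ge0.
have h5 : 0 <= n%:R * q ^+ 2 / 2 by rewrite divr_ge0 ?mulr_ge0 ?exprn_ge0.
have e : n%:R * q ^+ 3 = (n%:R * q ^+ 2 / 2) * (2 * q) by rewrite exprS; field.
rewrite e in hA.
have := ler_wpM2l h5 hB; have := mulr_ge0 h5 h4; lra.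
Qed.

Lemma U_down (R : realFieldType) (q : R) n i k : 0 <= q -> q <= 1 ->
  (1 <= i)%N -> (k <= i)%N -> (i < n)%N ->
  UU q n i.+1 k <= (1 + n%:R * q ^+ 2 / 2) * UU q n i k.
Proof.
move=> q0 q1 i1 ik kn; rewrite /UU.
have h1 : q ^+ (dist i.+1 k ^ 2) <= q ^+ (dist i k ^ 2).
  apply: ler_wiXn2l => //; rewrite /dist; nia.
have hA := @s_ub _ q n i.+1 q0 q1 ltac:(lia).
have hB := @s_lb2 _ q n i q0 ltac:(lia) ltac:(lia).
have h4 : 0 <= q ^+ (dist i k ^ 2) by rewrite exprn_ge0.
have h5 : 0 <= n%:R * q ^+ 2 / 2 by rewrite divr_ge0 ?mulr_ge0 ?exprn_ge0.
have e : n%:R * q ^+ 3 = (n%:R * q ^+ 2 / 2) * (2 * q) by rewrite exprS; field.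
rewrite e in hA.
have := ler_wpM2l h5 hB; have := mulr_ge0 h5 h4; lra.
Qed.

Lemma key3 (R : realFieldType) (b c : R) : 0 <= b -> 0 <= c ->
  (1 - (b + c)) * ((1 + b) * (1 + c)) <= 1.
Proof.
move=> b0 c0.
have e : (1 - (b + c)) * ((1 + b) * (1 + c)) = 1 - (b * b + b * c + c * c + (b + c) * (b * c)) by ring.
rewrite e.
have := mulr_ge0 b0 b0; have := mulr_ge0 b0 c0; have := mulr_ge0 c0 c0.
have := mulr_ge0 (addr_ge0 b0 c0) (mulr_ge0 b0 c0).
lra.
Qed.

Lemma step_rise (R : realFieldType) (a b za zb be c : R) :
  0 < a -> 0 < b -> 1 <= za -> 0 < zb -> 0 <= be -> 0 <= c ->
  a <= (1 + be) * b -> zb <= 1 + c ->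
  (1 - (be + c)) * ((a / za) / (b / zb)) <= Num.min 1 ((a / za) / (b / zb)).
Proof.
move=> a0 b0 za1 zb0 be0 c0 hab hz.
have za0 : 0 < za by lra.
set x := (a / za) / (b / zb).
have x0 : 0 < x by rewrite /x !divr_gt0.
have ex : x * (za * b) = a * zb by rewrite /x; field; rewrite ?gt_eqF //; lra.
have hx : x <= (1 + be) * (1 + c).
  have h1 : a * zb <= (1 + be) * b * (1 + c) by
    apply: ler_pM => //; [lra | lra].
  have h2 : (1 + be) * b * (1 + c) <= (1 + be) * (1 + c) * (za * b).
    have -> : (1 + be) * (1 + c) * (za * b) = ((1 + be) * b * (1 + c)) * za by ring.
    rewrite ler_peMr //; apply: mulr_ge0; [apply: mulr_ge0 | ]; lra.
  have h3 : x * (za * b) <= (1 + be) * (1 + c) * (za * b) by rewrite ex; lra.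
  by rewrite ler_pM2r ?mulr_gt0 in h3.
rewrite le_min; apply/andP; split.
  case: (lerP 0 (1 - (be + c))) => h.
    apply: le_trans (key3 be0 c0); exact: ler_wpM2l.
  have : 0 < (be + c - 1) * x by apply: mulr_gt0 => //; lra.
  lra.
have := mulr_ge0 (addr_ge0 be0 c0) (ltW x0); lra.
Qed.

Lemma step_fall (R : realFieldType) (a b za zb be c : R) :
  0 < a -> 0 < b -> 0 < za -> 1 <= zb -> 0 <= be -> 0 <= c ->
  b <= (1 + be) * a -> za <= 1 + c ->
  1 - (be + c) <= Num.min 1 ((a / za) / (b / zb)).
Proof.
move=> a0 b0 za0 zb1 be0 c0 hab hz.
have zb0 : 0 < zb by lra.
set x := (a / za) / (b / zb).
have ex : x * (za * b) = a * zb by rewrite /x; field; rewrite ?gt_eqF //; lra.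
have hx : 1 - (be + c) <= x.
  rewrite -(ler_pM2r (mulr_gt0 za0 b0)) ex.
  case: (lerP 0 (1 - (be + c))) => h.
    have h1 : za * b <= (1 + c) * ((1 + be) * a) by apply: ler_pM => //; lra.
    have h2 := ler_wpM2l h h1.
    have h3 := key3 be0 c0.
    have h4 : (1 - (be + c)) * ((1 + c) * ((1 + be) * a)) =
       ((1 - (be + c)) * ((1 + be) * (1 + c))) * a by ring.
    rewrite h4 in h2.
    have h5 := ler_wpM2r (ltW a0) h3.
    have h6 : a <= a * zb by rewrite ler_peMr //; lra.
    lra.
  have : 0 < (be + c - 1) * (za * b) by apply: mulr_gt0; [lra | exact: mulr_gt0].
  have := mulr_gt0 a0 zb0; lra.
rewrite le_min hx andbT; lra.
Qed.

Lemma bernoulli (R : realFieldType) (d : R) m : 0 <= d -> d <= 1 ->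
  1 - m%:R * d <= (1 - d) ^+ m.
Proof.
move=> d0 d1; elim: m => [|m IH]; first by rewrite expr0 mul0r subr0.
rewrite exprS -natr1.
have h : 0 <= 1 - d by lra.
have := ler_wpM2l h IH.
have := mulr_ge0 (ler0n R m) (mulr_ge0 d0 d0).
have e : (1 - d) * (1 - m%:R * d) = 1 - (m%:R + 1) * d + m%:R * (d * d) by ring.
rewrite e; lra.
Qed.

Lemma prod_bound (R : realFieldType) (P : nat -> R) (d : R) (K L : nat) :
  (forall i, 0 < P i) -> (forall i, (i <= L)%N -> P i <= 1) -> 0 <= d -> d <= 1 -> (K <= L)%N ->
  (forall i, (1 <= i)%N -> (i < K)%N ->
     (1 - d) * (P i.-1 / P i) <= Num.min 1 (P i.-1 / P i)) ->
  (forall i, (K < i)%N -> (i <= L)%N -> 1 - d <= Num.min 1 (P i.-1 / P i)) ->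
  (1 - d) ^+ L * P 0%N <= \prod_(1 <= i < L.+1) Num.min 1 (P i.-1 / P i).
Proof.
move=> Pp P1 d0 d1 KL hr hf.
set f := fun i => Num.min 1 (P i.-1 / P i).
have fge : forall i, 0 <= f i.
  by move=> i; rewrite /f le_min ler01 /= divr_ge0 // ltW.
have hd : 0 <= 1 - d by lra.
suff : forall m, (m <= L)%N ->
   (1 - d) ^+ m * P 0%N / (if (m < K)%N then P m else 1) <= \prod_(1 <= i < m.+1) f i.
  move=> /(_ L (leqnn L)); rewrite ifF ?divr1 //; apply/negbTE; rewrite -leqNgt //.
elim => [|m IH] hm.
  rewrite big_geq // expr0 mul1r; case: ifP => _; first by rewrite divff ?gt_eqF.
  by rewrite divr1 P1.
rewrite big_nat_recr //=.
have IH' := IH (ltnW hm).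
have Pm := Pp m; have Pm1 := Pp m.+1; have P0 := Pp 0%N.
have pw : 0 <= (1 - d) ^+ m by rewrite exprn_ge0.
case: (ltngtP m.+1 K) => hK.
  rewrite ifT in IH'; last by lia.
  have h1 := hr m.+1 (ltn0Sn m) hK; rewrite /= in h1.
  have h0 : 0 <= (1 - d) ^+ m * P 0%N / P m by rewrite !mulr_ge0 // ?invr_ge0 ltW.
  have := ler_pM h0 _ IH' h1.
  have e : (1 - d) ^+ m * P 0%N / P m * ((1 - d) * (P m / P m.+1)) =
     (1 - d) ^+ m.+1 * P 0%N / P m.+1.
    by rewrite exprS; field; do ?[apply/andP; split]; rewrite gt_eqF.
  rewrite e; apply; by rewrite mulr_ge0 // divr_ge0 // ltW.
- rewrite ifF in IH'; last by lia.
  rewrite divr1 in IH' *.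
  have h1 := hf m.+1 hK hm.
  have := ler_pM (mulr_ge0 pw (ltW P0)) hd IH' h1.
  have e : (1 - d) ^+ m.+1 * P 0%N = (1 - d) ^+ m * P 0%N * (1 - d) by rewrite exprSr; ring.
  by rewrite divr1 e.
- rewrite ifT in IH'; last by lia.
  rewrite ?divr1.
  have h1 : P m <= f m.+1.
    rewrite /f le_min P1 /=; last by lia.
    rewrite ler_pdivlMr // ler_piMr; [by [] | exact: ltW | apply: P1; lia].
  have h0 : 0 <= (1 - d) ^+ m * P 0%N / P m by rewrite !mulr_ge0 // ?invr_ge0 ltW.
  have := ler_pM h0 (ltW Pm) IH' h1.
  have e : (1 - d) ^+ m * P 0%N / P m * P m = (1 - d) ^+ m * P 0%N.
    by field; do ?[apply/andP; split]; rewrite gt_eqF.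
  rewrite e => h2; apply: le_trans h2.
  have e2 : (1 - d) ^+ m.+1 * P 0%N = ((1 - d) ^+ m * P 0%N) * (1 - d) by rewrite exprSr; ring.
  rewrite e2; have := mulr_ge0 (mulr_ge0 pw (ltW P0)) d0; lra.
Qed.

Lemma num1 (R : realFieldType) (r : R) : 0 < r -> r <= 1 / 2 ->
  (1 - r) * (r ^+ 4 / 2 + 2 * r ^+ 2 + 2 * r + r ^+ 10 + r ^+ 6) <= 7 / 8.
Proof.
move=> r0 r12.
have r2 : r ^+ 2 <= 1 / 4.
  have := ler_pM (ltW r0) (ltW r0) r12 r12; rewrite expr2; lra.
have r4 : r ^+ 4 <= 1 / 16.
  have h : 0 <= r ^+ 2 by rewrite exprn_ge0 // ltW.
  have := ler_pM h h r2 r2; rewrite -exprD; lra.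
have r1 : r <= 1 by lra.
have r6 : r ^+ 6 <= 1 / 64.
  have h : 0 <= r ^+ 2 by rewrite exprn_ge0 // ltW.
  have h4 : 0 <= r ^+ 4 by rewrite exprn_ge0 // ltW.
  have := ler_pM h4 h r4 r2; rewrite -exprD; lra.
have r10 : r ^+ 10 <= r ^+ 6 by apply: ler_wiXn2l => //; apply: ltW.
have E0 : 0 <= r * (r ^+ 4 / 2 + r ^+ 10 + r ^+ 6).
  by apply: mulr_ge0; [apply: ltW | rewrite !addr_ge0 ?divr_ge0 ?exprn_ge0 // ltW].
have m : 0 <= (1 / 2 - r) * (3 / 4 - r ^+ 2 - r / 2) by apply: mulr_ge0; lra.
have e2 : 2 * r - 2 * r * r ^+ 2 = 3 / 4 - 2 * ((1 / 2 - r) * (3 / 4 - r ^+ 2 - r / 2)) by field.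
have e3 : (1 - r) * (r ^+ 4 / 2 + 2 * r ^+ 2 + 2 * r + r ^+ 10 + r ^+ 6) =
  (2 * r - 2 * r * r ^+ 2) + (r ^+ 4 / 2 + r ^+ 10 + r ^+ 6) - r * (r ^+ 4 / 2 + r ^+ 10 + r ^+ 6).
  by rewrite !exprS expr0; field.
rewrite e3 e2.
lra.
Qed.

Lemma Z_gt0 (R : realFieldType) (q : R) n j : 0 < q -> (1 <= n)%N -> 0 < ZZ q n j.
Proof.
move=> q0 n1; rewrite /ZZ big_ltn //.
have := @U_gt0 R q n j 1 q0.
have : 0 <= \sum_(2 <= i < n.+1) UU q n j i.
  by apply: sumr_ge0 => i _; apply: ltW; apply: U_gt0.
lra.
Qed.

Ltac lia' := repeat match goal with
 | H : is_true (@Order.le _ _ _ _) |- _ => clear H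
 | H : is_true (@Order.lt _ _ _ _) |- _ => clear H
 | H : @eq ?T _ _ |- _ => lazymatch T with nat => fail | _ => clear H end
 | H : forall _, _ |- _ => clear H
 end; lia.

Lemma prodk_lb (R : realFieldType) (L k : nat) : (1 <= L)%N -> (1 <= k <= L.+1)%N ->
  1 / ((L.+1) ^ 7)%:R < prodk R L k.
Proof.
move=> hL hk.
set n := L.+1.
set N : R := n%:R.
have N2 : 2 <= N by rewrite /N ler_nat /n; lia'.
have N0 : N != 0 by apply/eqP => h; rewrite h in N2; lra.
set r : R := N^-1.
have r0 : 0 < r by rewrite /r invr_gt0; lra.
have r12 : r <= 1 / 2.
  rewrite /r div1r lef_pV2 ?posrE //; lra.
have r1 : r <= 1 by lra.
set q : R := (gam R L)^-1.
have qr : q = r ^+ 3 by rewrite /q /r /gam natrX exprVn.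
have q0 : 0 <= q by rewrite qr exprn_ge0 // ltW.
have q1 : q <= 1 by rewrite qr exprn_ile1 // ltW.
set be : R := n%:R * q ^+ 2 / 2.
set c : R := zh q n - 1.
have ebe : be = r ^+ 5 / 2 by rewrite /be qr -/N /r; field.
have ec : c = 2 * r ^+ 3 + r ^+ 11 + 2 * r ^+ 2 + r ^+ 7.
  by rewrite /c /zh qr -/N /r; field.
have be0 : 0 <= be by rewrite ebe divr_ge0 // exprn_ge0 // ltW.
have c0 : 0 <= c by rewrite ec !addr_ge0 ?mulr_ge0 ?exprn_ge0 // ltW.
have hLd : L%:R * (be + c) <= 7 / 8.
  have eL : L%:R = N - 1 by rewrite /N /n -natr1; ring.
  have e : L%:R * (be + c) = (1 - r) * (r ^+ 4 / 2 + 2 * r ^+ 2 + 2 * r + r ^+ 10 + r ^+ 6).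
    by rewrite eL ebe ec /r; field.
  by rewrite e; apply: num1.
have L1 : 1 <= L%:R :> R by rewrite ler1n.
have d1 : be + c <= 1.
  have := ler_wpM2r (addr_ge0 be0 c0) L1; lra.
have c1 : c <= 1.
  rewrite ec.
  have h2 : r ^+ 2 <= 1 / 4.
    have := ler_pM (ltW r0) (ltW r0) r12 r12; rewrite expr2; lra.
  have h3 : r ^+ 3 <= r ^+ 2 by apply: ler_wiXn2l => //; apply: ltW.
  have h7 : r ^+ 7 <= r ^+ 2 by apply: ler_wiXn2l => //; apply: ltW.
  have h11 : r ^+ 11 <= r ^+ 2 by apply: ler_wiXn2l => //; apply: ltW.
  lra.
have zhc : zh q n = 1 + c by rewrite /c; ring.
have kn : (k <= n)%N by case/andP: hk.
have k1 : (1 <= k)%N by case/andP: hk.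
have main := @prod_bound R (fun i => piA R L i k) (be + c) k.-1 L.
rewrite /prodk.
have Hmain : (1 - (be + c)) ^+ L * piA R L 0 k <=
   \prod_(1 <= i < L.+1) Num.min 1 (piA R L i.-1 k / piA R L i k).
  apply: main.
  - move=> i; rewrite piA_eq -/q -/n divr_gt0 //.
      by apply: U_gt0; rewrite qr exprn_gt0.
    by apply: Z_gt0; rewrite ?qr ?exprn_gt0.
  - move=> i hi; rewrite piA_eq -/q -/n ler_pdivrMr ?mul1r; last first.
      by apply: Z_gt0; rewrite ?qr ?exprn_gt0.
    by apply: U_le_Z => //; rewrite /n; lia'.
  - exact: addr_ge0.
  - exact: d1.
  - rewrite /n in kn; lia'.
  - move=> i i1 iK; rewrite !piA_eq prednK // -/q -/n.
    apply: step_rise => //.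
    + by apply: U_gt0; rewrite qr exprn_gt0.
    + by apply: U_gt0; rewrite qr exprn_gt0.
    + by apply: Z_lb => //; rewrite /n; lia'.
    + by apply: (lt_le_trans ltr01); apply: Z_lb => //; rewrite /n; lia'.
    + by apply: U_up => //; lia'.
    + by rewrite -zhc; apply: Z_ub => //; rewrite /n; lia'.
  - move=> i iK iL; rewrite !piA_eq prednK -/q -/n; last by lia'.
    apply: step_fall => //.
    + by apply: U_gt0; rewrite qr exprn_gt0.
    + by apply: U_gt0; rewrite qr exprn_gt0.
    + by apply: (lt_le_trans ltr01); apply: Z_lb => //; rewrite /n; lia'.
    + by apply: Z_lb => //; rewrite /n; lia'.
    + by apply: U_down => //; rewrite /n; lia'.
    + by rewrite -zhc; apply: Z_ub => //; rewrite /n; lia'.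
apply: lt_le_trans Hmain.
have hB := @bernoulli R (be + c) L (addr_ge0 be0 c0) d1.
have hB' : 1 / 8 <= (1 - (be + c)) ^+ L by lra.
have hP : q <= piA R L 0 k.
  rewrite piA_eq -/q -/n ler_pdivlMr; last first.
    apply: (lt_le_trans ltr01); apply: Z_lb => //; rewrite /n; lia'.
  have hz : ZZ q n 1 <= 2 by have := @Z_ub R q n 1 q0 q1 ltac:(rewrite /n; lia'); lra.
  have hs : 2 * q <= UU q n 1 k.
    rewrite /UU; have := @s_lb2 R q n 1 q0 (leqnn 1) ltac:(rewrite /n; lia').
    have : 0 <= q ^+ (dist 1 k ^ 2) by rewrite exprn_ge0.
    lra.
  have := ler_wpM2l q0 hz; lra.
have e7 : 1 / (n ^ 7)%:R = r ^+ 7 :> R by rewrite natrX -/N /r exprVn div1r.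
rewrite e7.
have h8 : 0 <= 1 / 8 :> R by lra.
have := ler_pM h8 q0 hB' hP.
rewrite qr.
have r4 : r ^+ 4 <= 1 / 16.
  have h2 : r ^+ 2 <= 1 / 4.
    have := ler_pM (ltW r0) (ltW r0) r12 r12; rewrite expr2; lra.
  have h : 0 <= r ^+ 2 by rewrite exprn_ge0 // ltW.
  have := ler_pM h h h2 h2; rewrite -exprD; lra.
have r3 : 0 < r ^+ 3 by rewrite exprn_gt0.
have e : r ^+ 7 = r ^+ 4 * r ^+ 3 by rewrite -exprD.
have := ler_wpM2r (ltW r3) r4.
rewrite -e; lra.
Qed.

Unset Implicit Arguments.
Theorem lemma12 (R : realFieldType) (L : nat) (hL : (1 <= L)%N) :
  1 / ((L.+1) ^ 7)%:R < Bratio R L.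
Proof.
rewrite /Bratio big_nat_cond.
apply: (big_ind (fun x => 1 / ((L.+1) ^ 7)%:R < x)).
- rewrite ltr_pdivrMr ?mul1r ?ltr0n ?expn_gt0 // ltr1n.
  by rewrite -[1%N](exp1n 7) ltn_exp2r.
- by move=> x y hx hy; rewrite lt_min hx hy.
- by move=> k /andP [hk _]; apply: prodk_lb => //; lia.
Qed.
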